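(* Let $(X,G)$ and $(Y,H)$ be odometers (with $G,H$ countable groups). If $(X,G)$ and $(Y,H)$ are structurally conjugate, then they are continuously orbit equivalent.
   Context: $G$-odometer: for a decreasing sequence $G_0\supseteq G_1\supseteq\cdots$ of finite-index subgroups of $G$ (not necessarily normal), the inverse limit $\varprojlim(G/G_n,\pi_n)$ of left coset spaces under the natural maps $\pi_n:G/G_n\to G/G_{n-1}$, with $G$ acting by left multiplication coordinatewise; $\{G_n\}$ determines a system if the system is conjugate to this odometer. Structural conjugacy: there exist decreasing sequences of finite-index subgroups $\{G_n\}_{n\ge0}$ of $G$ and $\{H_n\}_{n\ge0}$ of $H$ determining $(X,G)$ and $(Y,H)$ respectively, and a group isomorphism $\theta:H_0\to G_0$ with $\theta(H_n)=G_n$ for all $n\ge0$ and $[G:G_0]=[H:H_0]<\infty$. Continuous orbit equivalence: a homeomorphism $\psi:X\to Y$ mapping $G$-orbits bijectively onto $H$-orbits, such that for every $x\in X$, $g\in G$ there are $h\in H$ and a clopen neighborhood $U$ of $x$ with $\psi(g\cdot z)=h\cdot\psi(z)$ for all $z\in U$, and symmetrically for $\psi^{-1}$. *)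

(* Defs.v *)
From Stdlib Require Import List Arith.
Set Implicit Arguments.
Unset Strict Implicit.

Record grp := Grp {
  gcar :> Type;
  gmul : gcar -> gcar -> gcar;
  ginv : gcar -> gcar;
  gone : gcar;
  gmulA : forall a b c, gmul a (gmul b c) = gmul (gmul a b) c;
  gmul1l : forall a, gmul gone a = a;
  gmul1r : forall a, gmul a gone = a;
  gmulVl : forall a, gmul (ginv a) a = gone;
  gmulVr : forall a, gmul a (ginv a) = gone
}.

Definition countable_grp (G : grp) : Prop :=
  exists f : nat -> G, forall g : G, exists n, f n = g.

Definition is_subgroup (G : grp) (K : G -> Prop) : Prop :=
  K (gone G) /\ (forall a b, K a -> K b -> K (gmul a b)) /\
  (forall a, K a -> K (ginv a)).

Definition is_lcoset (G : grp) (K : G -> Prop) (C : G -> Prop) : Prop :=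
  exists a : G, forall y, C y <-> exists k, K k /\ y = gmul a k.

Definition has_index (G : grp) (K : G -> Prop) (n : nat) : Prop :=
  exists reps : list G, length reps = n /\
    (forall g : G, exists r, In r reps /\ K (gmul (ginv r) g)) /\
    (forall i j d, i < n -> j < n ->
       K (gmul (ginv (nth i reps d)) (nth j reps d)) -> i = j).

Definition finite_index (G : grp) (K : G -> Prop) : Prop :=
  exists n, has_index K n.

Definition subgroup_chain (G : grp) (Gs : nat -> G -> Prop) : Prop :=
  (forall n, is_subgroup (Gs n)) /\ (forall n, finite_index (Gs n)) /\
  (forall n g, Gs (S n) g -> Gs n g).

(* a point is a compatible sequence of left cosets c n in G/G_n with
   pi_n (c (S n)) = c n, i.e. c (S n) included in c n *)
Definition odo_compat (G : grp) (Gs : nat -> G -> Prop) (c : nat -> G -> Prop)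
  : Prop :=
  forall n, is_lcoset (Gs n) (c n) /\ (forall y, c (S n) y -> c n y).

Definition odo (G : grp) (Gs : nat -> G -> Prop) : Type :=
  { c : nat -> G -> Prop | odo_compat Gs c }.

Definition coset_act (G : grp) (g : G) (C : G -> Prop) : G -> Prop :=
  fun y => exists c, C c /\ y = gmul g c.

Lemma coset_act_compat (G : grp) (Gs : nat -> G -> Prop) (g : G)
  (c : nat -> G -> Prop) :
  odo_compat Gs c -> odo_compat Gs (fun n => coset_act g (c n)).
Proof.
  intros H n. destruct (H n) as [[a Ha] Hinc]. split.
  - exists (gmul g a). intros y. unfold coset_act. split.
    + intros [c0 [Hc0 ->]]. apply Ha in Hc0. destruct Hc0 as [k [Hk ->]].
      exists k. split; [exact Hk| apply gmulA].
    + intros [k [Hk ->]]. exists (gmul a k). split.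
      * apply Ha. exists k. auto.
      * symmetry; apply gmulA.
  - intros y [c0 [Hc0 ->]]. exists c0. split; auto.
Qed.

Definition odo_act (G : grp) (Gs : nat -> G -> Prop) (g : G) (x : odo Gs)
  : odo Gs :=
  exist _ (fun n => coset_act g (proj1_sig x n))
        (coset_act_compat g (proj2_sig x)).

(* inverse-limit topology (product of discrete topologies): U is open iff
   it is a union of cylinders {y | y_n = x_n} *)
Definition odo_open (G : grp) (Gs : nat -> G -> Prop) (U : odo Gs -> Prop)
  : Prop :=
  forall x, U x -> exists n, forall y : odo Gs,
    (forall g, proj1_sig y n g <-> proj1_sig x n g) -> U y.

Record system (G : grp) := System {
  spc :> Type;
  is_open : (spc -> Prop) -> Prop;
  open_full : is_open (fun _ => True);
  open_union : forall (I : Type) (F : I -> spc -> Prop),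
      (forall i, is_open (F i)) -> is_open (fun x => exists i, F i x);
  open_inter : forall U V, is_open U -> is_open V ->
      is_open (fun x => U x /\ V x);
  act : G -> spc -> spc;
  act_one : forall x, act (gone G) x = x;
  act_mul : forall g h x, act (gmul g h) x = act g (act h x);
  act_cont : forall g U, is_open U -> is_open (fun x => U (act g x))
}.

Definition continuous_wrt (A B : Type) (openA : (A -> Prop) -> Prop)
  (openB : (B -> Prop) -> Prop) (f : A -> B) : Prop :=
  forall V, openB V -> openA (fun a => V (f a)).

Definition clopen (G : grp) (X : system G) (U : X -> Prop) : Prop :=
  is_open U /\ is_open (fun x => ~ U x).

Definition determines (G : grp) (X : system G) (Gs : nat -> G -> Prop) : Prop :=
  exists (phi : X -> odo Gs) (phi' : odo Gs -> X),
    (forall x, phi' (phi x) = x) /\ (forall y, phi (phi' y) = y) /\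
    continuous_wrt (@is_open G X) (@odo_open G Gs) phi /\
    continuous_wrt (@odo_open G Gs) (@is_open G X) phi' /\
    (forall g x, phi (@act _ X g x) = odo_act g (phi x)).

Definition is_odometer (G : grp) (X : system G) : Prop :=
  exists Gs, subgroup_chain Gs /\ determines X Gs.

Definition structurally_conjugate (G H : grp) (X : system G) (Y : system H)
  : Prop :=
  exists (Gs : nat -> G -> Prop) (Hs : nat -> H -> Prop) (theta : H -> G),
    subgroup_chain Gs /\ subgroup_chain Hs /\
    determines X Gs /\ determines Y Hs /\
    (forall h, Hs 0 h -> Gs 0 (theta h)) /\
    (forall a b, Hs 0 a -> Hs 0 b -> theta (gmul a b) = gmul (theta a) (theta b)) /\
    (forall a b, Hs 0 a -> Hs 0 b -> theta a = theta b -> a = b) /\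
    (forall g, Gs 0 g -> exists h, Hs 0 h /\ theta h = g) /\
    (forall n g, Gs n g <-> exists h, Hs n h /\ theta h = g) /\
    (exists k, has_index (Gs 0) k /\ has_index (Hs 0) k).

Definition locally_cocycle (G H : grp) (X : system G) (Y : system H)
  (psi : X -> Y) : Prop :=
  forall (x : X) (g : G), exists (h : H) (U : X -> Prop),
    clopen U /\ U x /\ forall z, U z -> psi (@act _ X g z) = @act _ Y h (psi z).

Definition continuously_orbit_equivalent (G H : grp) (X : system G)
  (Y : system H) : Prop :=
  exists (psi : X -> Y) (psi' : Y -> X),
    (forall x, psi' (psi x) = x) /\ (forall y, psi (psi' y) = y) /\
    continuous_wrt (@is_open G X) (@is_open H Y) psi /\
    continuous_wrt (@is_open H Y) (@is_open G X) psi' /\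
    (forall x x' : X, (exists g, x' = @act _ X g x) <->
                      (exists h, psi x' = @act _ Y h (psi x))) /\
    locally_cocycle psi /\ locally_cocycle psi'.

(* Main.v *)
Require Import Defs.
From Stdlib Require Import List Arith Lia ClassicalEpsilon FunctionalExtensionality PropExtensionality ProofIrrelevance.
Set Implicit Arguments.
Unset Strict Implicit.

Lemma gmulA_r (G:grp) (a b c : G) : gmul (gmul a b) c = gmul a (gmul b c).
Proof. symmetry; apply gmulA. Qed.
Lemma canc1 (G:grp) (a b:G) : gmul (ginv a) (gmul a b) = b.
Proof. rewrite gmulA, gmulVl, gmul1l. reflexivity. Qed.
Lemma canc2 (G:grp) (a b:G) : gmul a (gmul (ginv a) b) = b.
Proof. rewrite gmulA, gmulVr, gmul1l. reflexivity. Qed.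
Lemma ginv_uniq (G:grp) (a b:G) : gmul a b = gone G -> ginv a = b.
Proof. intro H. rewrite <- (gmul1r (ginv a)), <- H, canc1. reflexivity. Qed.
Lemma ginv_mul (G:grp) (a b:G): ginv (gmul a b) = gmul (ginv b) (ginv a).
Proof. apply ginv_uniq. rewrite gmulA_r, canc2, gmulVr. reflexivity. Qed.
Lemma ginv_ginv (G:grp) (a:G): ginv (ginv a) = a.
Proof. apply ginv_uniq. apply gmulVl. Qed.
Lemma ginv1 (G:grp) : ginv (gone G) = gone G.
Proof. apply ginv_uniq. apply gmul1l. Qed.

Ltac gsimp := repeat (progress rewrite ?ginv_mul, ?ginv_ginv, ?ginv1, ?gmulA_r, ?gmulVl, ?gmulVr, ?canc1, ?canc2, ?gmul1l, ?gmul1r).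

Lemma sg1 (G:grp) (K:G->Prop) : is_subgroup K -> K (gone G).
Proof. intros [a _]; exact a. Qed.
Lemma sgM (G:grp) (K:G->Prop) a b : is_subgroup K -> K a -> K b -> K (gmul a b).
Proof. intros [_ [m _]]; auto. Qed.
Lemma sgV (G:grp) (K:G->Prop) a : is_subgroup K -> K a -> K (ginv a).
Proof. intros [_ [_ v]]; auto. Qed.

Lemma cos_ne (G:grp) (K C:G->Prop) : is_subgroup K -> is_lcoset K C -> exists y, C y.
Proof. intros HK [a Ha]. exists a. apply Ha. exists (gone G). split. apply sg1; auto. rewrite gmul1r; auto. Qed.

Lemma cos_diff (G:grp) (K C:G->Prop) {y z} : is_subgroup K -> is_lcoset K C -> C y -> C z -> K (gmul (ginv y) z).
Proof. intros HK [a Ha] Hy Hz. apply Ha in Hy. apply Ha in Hz.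
  destruct Hy as [k1 [Hk1 ->]]. destruct Hz as [k2 [Hk2 ->]]. gsimp.
  apply sgM; auto. apply sgV; auto. Qed.

Lemma cos_ext (G:grp) (K C:G->Prop) {y z} : is_subgroup K -> is_lcoset K C -> C y -> K (gmul (ginv y) z) -> C z.
Proof. intros HK [a Ha] Hy Hk. pose proof Hy as Hy'. apply Ha in Hy'. destruct Hy' as [k1 [Hk1 E]].
  apply Ha. exists (gmul k1 (gmul (ginv y) z)). split. apply sgM; auto.
  rewrite E. gsimp. reflexivity. Qed.

Lemma cos_eq (G:grp) (K C D:G->Prop) a : is_subgroup K -> is_lcoset K C -> is_lcoset K D ->
  C a -> D a -> forall y, C y <-> D y.
Proof. intros HK HC HD Ca Da y; split; intro H.
  - apply (cos_ext HK HD Da). apply (cos_diff HK HC Ca H).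
  - apply (cos_ext HK HC Ca). apply (cos_diff HK HD Da H). Qed.

Lemma chain_down (G:grp) (Gs : nat -> G -> Prop) : subgroup_chain Gs ->
  forall n m g, m <= n -> Gs n g -> Gs m g.
Proof. intros [_ [_ Hd]] n m g Hmn. induction Hmn; auto. Qed.

Lemma odo_sub (G:grp) (Gs : nat -> G -> Prop) (c : nat -> G -> Prop) : odo_compat Gs c ->
  forall n m y, m <= n -> c n y -> c m y.
Proof. intros Hc n m y Hmn. induction Hmn; auto. intro H. apply IHHmn. apply (proj2 (Hc m0)); auto. Qed.

Definition reps_ok (G:grp) (K: G->Prop) k (reps : list G) :=
  length reps = k /\ (forall g : G, exists r, In r reps /\ K (gmul (ginv r) g)) /\
    (forall i j d, i < k -> j < k ->
       K (gmul (ginv (nth i reps d)) (nth j reps d)) -> i = j).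

Definition idxG (G:grp) (K:G->Prop) k reps (g:G) : nat :=
  epsilon (inhabits 0) (fun i => i < k /\ K (gmul (ginv (nth i reps (gone G))) g)).

Lemma idx_spec (G:grp) (K:G->Prop) k reps g : reps_ok K k reps ->
  idxG K k reps g < k /\ K (gmul (ginv (nth (idxG K k reps g) reps (gone G))) g).
Proof. intros [Hl [Hc _]]. unfold idxG. apply epsilon_spec.
  destruct (Hc g) as [r [Hr Hk]]. destruct (In_nth reps r (gone G) Hr) as [n [Hn E]].
  exists n. rewrite E. split; auto. lia. Qed.

Lemma idx_uniq (G:grp) (K:G->Prop) k reps g i : is_subgroup K -> reps_ok K k reps ->
  i < k -> K (gmul (ginv (nth i reps (gone G))) g) -> idxG K k reps g = i.
Proof. intros HK Hr Hi Hg. destruct (idx_spec g Hr) as [Hj Hjg].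
  destruct Hr as [_ [_ Hd]]. apply (Hd _ _ (gone G)); auto.
  set (j := idxG K k reps g) in *.
  replace (gmul (ginv (nth j reps (gone G))) (nth i reps (gone G))) with
    (gmul (gmul (ginv (nth j reps (gone G))) g) (ginv (gmul (ginv (nth i reps (gone G))) g))).
  - apply sgM; auto. apply sgV; auto.
  - gsimp. reflexivity. Qed.

Lemma idx_coset (G:grp) (K:G->Prop) k reps g g' : is_subgroup K -> reps_ok K k reps ->
  K (gmul (ginv g) g') -> idxG K k reps g' = idxG K k reps g.
Proof. intros HK Hr H. destruct (idx_spec g Hr) as [Hj Hjg]. apply idx_uniq; auto.
  replace (gmul (ginv (nth (idxG K k reps g) reps (gone G))) g') with
   (gmul (gmul (ginv (nth (idxG K k reps g) reps (gone G))) g) (gmul (ginv g) g')).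
  apply sgM; auto. gsimp. reflexivity. Qed.
Record good (G H : grp) (Gs : nat -> G -> Prop) (Hs : nat -> H -> Prop)
  (R : G -> H -> Prop) (k : nat) (rG : list G) (rH : list H) : Prop := {
 gGs : subgroup_chain Gs; gHs : subgroup_chain Hs;
 grG : reps_ok (Gs 0) k rG; grH : reps_ok (Hs 0) k rH;
 Rdom : forall g h, R g h -> Gs 0 g /\ Hs 0 h;
 Rfun : forall g h h', R g h -> R g h' -> h = h';
 Rinj : forall g g' h, R g h -> R g' h -> g = g';
 Rtot : forall g, Gs 0 g -> exists h, R g h;
 Rsur : forall h, Hs 0 h -> exists g, R g h;
 Rmul : forall a b a' b', R a b -> R a' b' -> R (gmul a a') (gmul b b');
 Rlev : forall n g h, R g h -> (Gs n g <-> Hs n h) }.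

Lemma good_sym G H Gs Hs R k rG rH : @good G H Gs Hs R k rG rH ->
  @good H G Hs Gs (fun h g => R g h) k rH rG.
Proof. intros []. constructor; auto.
  - intros g h Hr. destruct (Rdom0 _ _ Hr); auto.
  - eauto.
  - eauto.
  - intros n g h Hr. symmetry; auto. Qed.

Lemma sg0 (G:grp) (Gs : nat -> G -> Prop) n : subgroup_chain Gs -> is_subgroup (Gs n).
Proof. intros [a _]; auto. Qed.

Lemma Rone G H Gs Hs R k rG rH : @good G H Gs Hs R k rG rH -> R (gone G) (gone H).
Proof. intro Hg. assert (H1 : Gs 0 (gone G)) by (apply sg1, sg0, (gGs Hg)).
  destruct (Rtot Hg H1) as [x Hx].
  pose proof (Rmul Hg Hx Hx) as Hxx. rewrite gmul1l in Hxx.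
  pose proof (Rfun Hg Hx Hxx) as E.
  assert (E2 : gone H = x). { rewrite <- (gmulVl x). rewrite E at 2. rewrite canc1. reflexivity. }
  rewrite E2; auto. Qed.

Lemma Rinv G H Gs Hs R k rG rH : @good G H Gs Hs R k rG rH ->
  forall a b, R a b -> R (ginv a) (ginv b).
Proof. intros Hg a b Hab. destruct (Rdom Hg Hab) as [Ha Hb].
  assert (H2 : Gs 0 (ginv a)) by (apply sgV; auto; apply sg0, (gGs Hg)).
  destruct (Rtot Hg H2) as [b' Hb'].
  pose proof (Rmul Hg Hb' Hab) as H1. rewrite gmulVl in H1.
  pose proof (Rfun Hg (Rone Hg) H1) as E.
  assert (b' = ginv b). { rewrite <- (gmul1r b'), <- (gmulVr b), gmulA, <- E, gmul1l. reflexivity. }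
  subst; auto. Qed.

Definition pt0 (G:grp) (c : nat -> G -> Prop) : G := epsilon (inhabits (gone G)) (fun y => c 0 y).

Lemma pt0_spec (G:grp) (Gs : nat -> G -> Prop) c : subgroup_chain Gs -> odo_compat Gs c -> c 0 (pt0 c).
Proof. intros HG Hc. unfold pt0. apply epsilon_spec. eapply cos_ne. apply (sg0 0 HG). apply (Hc 0). Qed.

Definition idx (G:grp) (Gs : nat -> G -> Prop) k rG (c : nat -> G -> Prop) := idxG (Gs 0) k rG (pt0 c).

Definition Fmap (G H : grp) (Gs : nat -> G -> Prop) (R : G -> H -> Prop) k rG rH
  (c : nat -> G -> Prop) (n : nat) (z : H) : Prop :=
  exists y h, c n y /\ R (gmul (ginv (nth (idx Gs k rG c) rG (gone G))) y) h /\
    z = gmul (nth (idx Gs k rG c) rH (gone H)) h.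

Lemma r_in (G:grp) (Gs : nat -> G -> Prop) k rG c n y : subgroup_chain Gs -> reps_ok (Gs 0) k rG ->
  odo_compat Gs c -> c n y -> Gs 0 (gmul (ginv (nth (idx Gs k rG c) rG (gone G))) y).
Proof. intros HG Hr Hc Hy. unfold idx. destruct (idx_spec (pt0 c) Hr) as [_ H1].
  assert (H0y : c 0 y) by (apply (odo_sub Hc (m:=0) (n:=n)); auto; lia).
  pose proof (cos_diff (sg0 0 HG) (proj1 (Hc 0)) (pt0_spec HG Hc) H0y) as H2.
  replace (gmul (ginv (nth (idxG (Gs 0) k rG (pt0 c)) rG (gone G))) y) with
    (gmul (gmul (ginv (nth (idxG (Gs 0) k rG (pt0 c)) rG (gone G))) (pt0 c)) (gmul (ginv (pt0 c)) y)).
  apply sgM; auto. apply sg0; auto. gsimp. reflexivity. Qed.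

Lemma idx_same (G:grp) (Gs : nat -> G -> Prop) k rG c c' : subgroup_chain Gs -> reps_ok (Gs 0) k rG ->
  odo_compat Gs c -> odo_compat Gs c' -> (forall y, c' 0 y <-> c 0 y) -> idx Gs k rG c' = idx Gs k rG c.
Proof. intros HG Hr Hc Hc' E. unfold idx. apply idx_coset; auto. apply sg0; auto.
  apply (cos_diff (sg0 0 HG) (proj1 (Hc 0))). apply (pt0_spec HG Hc). apply E. apply (pt0_spec HG Hc'). Qed.
Lemma Fmap_compat G H Gs Hs R k rG rH c : @good G H Gs Hs R k rG rH ->
  odo_compat Gs c -> odo_compat Hs (Fmap Gs R k rG rH c).
Proof. intros Hg Hc n. set (i := idx Gs k rG c). set (r := nth i rG (gone G)). set (s := nth i rH (gone H)).
  pose proof (gGs Hg) as HG. pose proof (gHs Hg) as HH.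
  split.
  - destruct (cos_ne (sg0 n HG) (proj1 (Hc n))) as [a Ha].
    destruct (Rtot Hg (r_in HG (grG Hg) Hc Ha)) as [ha Hha]. fold i r in Hha.
    exists (gmul s ha). intro z. split.
    + intros [y [h [Hy [HR ->]]]]. fold i r s in HR |- *. exists (gmul (ginv ha) h). split.
      * pose proof (Rmul Hg (Rinv Hg Hha) HR) as HR2.
        assert (E: gmul (ginv (gmul (ginv r) a)) (gmul (ginv r) y) = gmul (ginv a) y) by (gsimp; reflexivity).
        rewrite E in HR2. apply (proj1 (Rlev Hg n HR2)). exact (cos_diff (sg0 n HG) (proj1 (Hc n)) Ha Hy).
      * gsimp. reflexivity.
    + intros [kk [Hk ->]].
      assert (Hk0 : Hs 0 kk) by (apply (chain_down HH (n:=n)); auto; lia).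
      destruct (Rsur Hg Hk0) as [g Hgk].
      assert (Hgn : Gs n g) by (apply (proj2 (Rlev Hg n Hgk)); auto).
      exists (gmul a g), (gmul ha kk). split; [|split].
      * apply (cos_ext (sg0 n HG) (proj1 (Hc n)) Ha). rewrite canc1. auto.
      * fold i r. pose proof (Rmul Hg Hha Hgk) as H3. rewrite gmulA_r in H3. exact H3.
      * fold i s. apply gmulA_r.
  - intros z [y [h [Hy [HR ->]]]]. exists y, h. split; auto. apply (proj2 (Hc n)); auto. Qed.

Definition F G H Gs Hs R k rG rH (Hg : @good G H Gs Hs R k rG rH) (x : odo Gs) : odo Hs :=
  exist _ (Fmap Gs R k rG rH (proj1_sig x)) (Fmap_compat Hg (proj2_sig x)).

Lemma odo_eq (G:grp) (Gs : nat -> G -> Prop) (x x' : odo Gs) :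
  (forall n y, proj1_sig x n y <-> proj1_sig x' n y) -> x = x'.
Proof. destruct x as [c Hc], x' as [c' Hc']. simpl. intro E.
  assert (c = c'). { apply functional_extensionality; intro n. apply functional_extensionality; intro y.
    apply propositional_extensionality. apply E. }
  subst c'. f_equal. apply proof_irrelevance. Qed.
Lemma F_inv G H Gs Hs R k rG rH (Hg : @good G H Gs Hs R k rG rH)
  (Hg' : @good H G Hs Gs (fun h g => R g h) k rH rG) (x : odo Gs) : F Hg' (F Hg x) = x.
Proof. apply odo_eq. destruct x as [c Hc]. simpl.
  pose proof (gGs Hg) as HG. pose proof (gHs Hg) as HH.
  set (d := Fmap Gs R k rG rH c).
  assert (Hd : odo_compat Hs d) by (apply (Fmap_compat Hg Hc)).
  assert (Ei : idx Hs k rH d = idx Gs k rG c).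
  { unfold idx at 1. apply idx_uniq. apply sg0; auto. apply (grH Hg).
    apply (idx_spec (pt0 c) (grG Hg)).
    destruct (pt0_spec HH Hd) as [y [h [Hy [HR E]]]]. rewrite E, canc1.
    apply (Rdom Hg HR). }
  intros n w. unfold Fmap at 1. rewrite Ei. set (i := idx Gs k rG c).
  split.
  - intros [z [g [Hz [HR ->]]]]. destruct Hz as [y [h [Hy [HR2 ->]]]]. fold i in HR2.
    rewrite canc1 in HR. pose proof (Rinj Hg HR HR2) as E. rewrite E. gsimp. exact Hy.
  - intro Hw. destruct (Rtot Hg (r_in HG (grG Hg) Hc Hw)) as [h Hh]. fold i in Hh.
    exists (gmul (nth i rH (gone H)) h), (gmul (ginv (nth i rG (gone G))) w). split; [|split].
    + exists w, h. split; auto.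
    + rewrite canc1. exact Hh.
    + gsimp. reflexivity. Qed.
Lemma same0 (G:grp) (Gs : nat -> G -> Prop) c c' n : subgroup_chain Gs -> odo_compat Gs c -> odo_compat Gs c' ->
  (forall y, c' n y <-> c n y) -> (forall y, c' 0 y <-> c 0 y).
Proof. intros HG Hc Hc' E. destruct (cos_ne (sg0 n HG) (proj1 (Hc n))) as [a Ha].
  apply (cos_eq (a:=a) (sg0 0 HG) (proj1 (Hc' 0)) (proj1 (Hc 0))).
  apply (odo_sub Hc' (n:=n)); [lia|apply E; auto].
  apply (odo_sub Hc (n:=n)); [lia|auto]. Qed.

Lemma Fmap_cyl G H Gs Hs R k rG rH (Hg : @good G H Gs Hs R k rG rH) c c' n :
  odo_compat Gs c -> odo_compat Gs c' -> (forall y, c' n y <-> c n y) ->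
  forall z, Fmap Gs R k rG rH c' n z <-> Fmap Gs R k rG rH c n z.
Proof. intros Hc Hc' E. pose proof (gGs Hg) as HG.
  assert (Ei : idx Gs k rG c' = idx Gs k rG c) by
    (apply (idx_same HG (grG Hg) Hc Hc'); apply (same0 HG Hc Hc' E)).
  intro z. unfold Fmap. rewrite Ei. split; intros [y [h [Hy Hr]]]; exists y, h; split; auto; apply E; auto. Qed.

Lemma F_cont G H Gs Hs R k rG rH (Hg : @good G H Gs Hs R k rG rH) :
  continuous_wrt (@odo_open G Gs) (@odo_open H Hs) (F Hg).
Proof. intros V HV x Vx. destruct (HV _ Vx) as [n Hn]. exists n. intros y Ey. apply Hn.
  destruct x as [c Hc], y as [c' Hc']. simpl in *. apply (Fmap_cyl Hg Hc Hc' Ey). Qed.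

Lemma F_cocycle G H Gs Hs R k rG rH (Hg : @good G H Gs Hs R k rG rH) (x : odo Gs) (g : G) :
  exists h : H, forall x' : odo Gs, (forall y, proj1_sig x' 0 y <-> proj1_sig x 0 y) ->
    F Hg (odo_act g x') = odo_act h (F Hg x').
Proof. pose proof (gGs Hg) as HG. pose proof (grG Hg) as HrG.
  destruct x as [c Hc]. simpl.
  set (i := idx Gs k rG c). set (gc := fun n => coset_act g (c n)).
  assert (Hgc : odo_compat Gs gc) by (apply coset_act_compat; auto).
  set (j := idx Gs k rG gc).
  set (ri := nth i rG (gone G)). set (rj := nth j rG (gone G)).
  set (si := nth i rH (gone H)). set (sj := nth j rH (gone H)).
  assert (Hri : c 0 ri).
  { destruct (idx_spec (pt0 c) HrG) as [_ H1]. fold i ri in H1.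
    apply (cos_ext (sg0 0 HG) (proj1 (Hc 0)) (pt0_spec HG Hc)).
    rewrite <- (ginv_ginv (gmul (ginv (pt0 c)) ri)). apply sgV. apply sg0; auto.
    rewrite ginv_mul, ginv_ginv. exact H1. }
  assert (Ha : Gs 0 (gmul (ginv rj) (gmul g ri))).
  { assert (Hgri : gc 0 (gmul g ri)) by (exists ri; auto).
    pose proof (r_in HG HrG Hgc Hgri) as H1. exact H1. }
  destruct (Rtot Hg Ha) as [b Hb].
  exists (gmul sj (gmul b (ginv si))).
  intros [c' Hc'] E. simpl in E. apply odo_eq. simpl. intros n z.
  assert (Ei : idx Gs k rG c' = i) by (apply (idx_same HG HrG Hc Hc' E)).
  assert (Ej : idx Gs k rG (fun n => coset_act g (c' n)) = j).
  { apply (idx_same HG HrG Hgc (coset_act_compat g Hc')). intro y.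
    unfold gc, coset_act. split; intros [w [Hw ->]]; exists w; split; auto; apply E; auto. }
  unfold Fmap. rewrite Ei, Ej. fold ri rj si sj. split.
  - intros [y [h1 [[y' [Hy' ->]] [HR ->]]]].
    destruct (Rtot Hg (r_in HG HrG Hc' Hy')) as [h2 Hh2]. rewrite Ei in Hh2. fold ri in Hh2.
    pose proof (Rmul Hg Hb Hh2) as H3.
    assert (E3 : gmul (gmul (ginv rj) (gmul g ri)) (gmul (ginv ri) y') = gmul (ginv rj) (gmul g y'))
      by (gsimp; reflexivity).
    rewrite E3 in H3. pose proof (Rfun Hg HR H3) as E4. subst h1.
    exists (gmul si h2). split.
    + exists y', h2. auto.
    + gsimp. reflexivity.
  - intros [z' [[y' [h2 [Hy' [HR ->]]]] ->]].
    pose proof (Rmul Hg Hb HR) as H3.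
    assert (E3 : gmul (gmul (ginv rj) (gmul g ri)) (gmul (ginv ri) y') = gmul (ginv rj) (gmul g y'))
      by (gsimp; reflexivity).
    rewrite E3 in H3.
    exists (gmul g y'), (gmul b h2). split; [|split].
    + exists y'; auto.
    + exact H3.
    + gsimp. reflexivity. Qed.
Lemma comp_props G H (X : system G) (Y : system H) Gs Hs R k rG rH (Hg : @good G H Gs Hs R k rG rH)
  (phiX : X -> odo Gs) (phiY : Y -> odo Hs) (phiY' : odo Hs -> Y) :
  continuous_wrt (@is_open G X) (@odo_open G Gs) phiX ->
  continuous_wrt (@odo_open H Hs) (@is_open H Y) phiY' ->
  (forall y, phiY (phiY' y) = y) -> (forall y, phiY' (phiY y) = y) ->
  (forall g x, phiX (@act _ X g x) = odo_act g (phiX x)) ->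
  (forall h y, phiY (@act _ Y h y) = odo_act h (phiY y)) ->
  continuous_wrt (@is_open G X) (@is_open H Y) (fun x => phiY' (F Hg (phiX x))) /\
  locally_cocycle (fun x => phiY' (F Hg (phiX x))).
Proof. intros cX cY' E1 E2 aX aY. split.
  - intros V HV. exact (cX _ (F_cont (Hg:=Hg) (cY' V HV))).
  - intros x g. destruct (F_cocycle Hg (phiX x) g) as [h Hh].
    exists h, (fun z => forall y, proj1_sig (phiX z) 0 y <-> proj1_sig (phiX x) 0 y).
    split; [split|split].
    + apply (cX (fun p => forall y, proj1_sig p 0 y <-> proj1_sig (phiX x) 0 y)).
      intros p Hp. exists 0. intros q Eq y. rewrite Eq. apply Hp.
    + apply (cX (fun p => ~ forall y, proj1_sig p 0 y <-> proj1_sig (phiX x) 0 y)).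
      intros p Hp. exists 0. intros q Eq HU. apply Hp. intro y. rewrite <- Eq. apply HU.
    + intro; tauto.
    + intros z Uz. rewrite aX, (Hh _ Uz).
      rewrite <- (E1 (F Hg (phiX z))) at 1. rewrite <- aY, E2. reflexivity. Qed.

Theorem theorem3p3 (G H : grp) (X : system G) (Y : system H) :
  countable_grp G -> countable_grp H ->
  is_odometer X -> is_odometer Y ->
  structurally_conjugate X Y ->
  continuously_orbit_equivalent X Y.
Proof.
  intros _ _ _ _ [Gs [Hs [theta [HG [HH [DX [DY [T1 [T2 [T3 [T4 [T5 [kk [[rG HrG] [rH HrH]]]]]]]]]]]]]]].
  destruct DX as [pX [pX' [pX1 [pX2 [cX [cX' aX]]]]]].
  destruct DY as [pY [pY' [pY1 [pY2 [cY [cY' aY]]]]]].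
  set (R := fun (g : G) (h : H) => Hs 0 h /\ theta h = g).
  assert (Hg : good Gs Hs R kk rG rH).
  { constructor.
    - exact HG.
    - exact HH.
    - exact HrG.
    - exact HrH.
    - intros g h [Hh <-]. auto.
    - intros g h h' [Hh E] [Hh' E']. apply T3; auto. congruence.
    - intros g g' h [_ E] [_ E']. congruence.
    - intros g Hg0. destruct (T4 g Hg0) as [h [Hh E]]. exists h. split; auto.
    - intros h Hh. exists (theta h). split; auto.
    - intros a b a' b' [Hb <-] [Hb' <-]. split. apply sgM; auto. apply sg0; auto. apply T2; auto.
    - intros n g h [Hh <-]. split.
      + intro Hn. destruct (proj1 (T5 n (theta h)) Hn) as [h' [Hh' E]].
        assert (h' = h). { apply T3; auto. apply (chain_down HH (n:=n)); auto; lia. }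
        subst; auto.
      + intro Hn. apply T5. exists h; auto. }
  pose proof (good_sym Hg) as Hg'.
  destruct (comp_props Hg cX cY' pY2 pY1 aX aY) as [C1 L1].
  destruct (comp_props Hg' cY cX' pX2 pX1 aY aX) as [C2 L2].
  exists (fun x => pY' (F Hg (pX x))), (fun y => pX' (F Hg' (pY y))).
  assert (I1 : forall x, pX' (F Hg' (pY (pY' (F Hg (pX x))))) = x).
  { intro x. rewrite pY2, F_inv, pX1. reflexivity. }
  assert (I2 : forall y, pY' (F Hg (pX (pX' (F Hg' (pY y))))) = y).
  { intro y. rewrite pX2. rewrite (F_inv Hg' Hg). apply pY1. }
  split; [exact I1|split; [exact I2|split; [exact C1|split; [exact C2|split]]]].
  - intros x x'. split.
    + intros [g ->]. destruct (L1 x g) as [h [U [_ [Ux HU]]]]. exists h. apply HU; auto.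
    + intros [h Eh]. destruct (L2 (pY' (F Hg (pX x))) h) as [g [U [_ [Ux HU]]]].
      exists g. rewrite <- (I1 x'), Eh, (HU _ Ux), I1. reflexivity.
  - split; assumption.
Qed.
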